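(* Let $k\ge1$ and let $A_1,\dots,A_n$ be independent events with probabilities $u_i=\mathbf{P}(A_i)\in[0,1]$, where the sequence $u_1,\dots,u_n$ is either nondecreasing or nonincreasing. Then \[ \mathbf{P}\big(\{A_i\}_{i=1}^n\text{ has no }k\text{-gaps}\big)\;\ge\;\prod_{i=1}^n f_k(1-u_i). \]
   Context: For an integer $k\ge1$, $f_k:[0,1]\to[0,1]$ denotes the unique decreasing function satisfying $f_k(x)^k-f_k(x)^{k+1}=x^k-x^{k+1}$ for all $x\in[0,1]$; it is continuous with $f_k(0)=1$, $f_k(1)=0$. A sequence of events $A_1,\dots,A_n$ has a $k$-gap if there is an index $i$ with $i+k-1\le n$ such that none of $A_i,\dots,A_{i+k-1}$ occurs. *)

(* Defs.v *)
From Stdlib Require Import Reals Lra List Arith Bool.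
Import ListNotations.
Open Scope R_scope.

(* f is "the" function f_k: a (weakly) decreasing map [0,1] -> [0,1]
   with f(x)^k - f(x)^(k+1) = x^k - x^(k+1) for all x in [0,1].
   (Such f exists and is unique; it satisfies f 0 = 1, f 1 = 0.) *)
Definition is_fk (k : nat) (f : R -> R) : Prop :=
  (forall x, 0 <= x <= 1 -> 0 <= f x <= 1) /\
  (forall x, 0 <= x <= 1 -> f x ^ k - f x ^ (k + 1) = x ^ k - x ^ (k + 1)) /\
  (forall x y, 0 <= x <= 1 -> 0 <= y <= 1 -> x <= y -> f y <= f x).

(* All outcomes (omega_1, ..., omega_n) in {0,1}^n, as boolean lists;
   omega_i = true means that event A_i occurs. *)
Fixpoint bitvecs (n : nat) : list (list bool) :=
  match n with
  | O => [[]]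
  | S m => map (cons true) (bitvecs m) ++ map (cons false) (bitvecs m)
  end.

Definition has_kgapb (k : nat) (w : list bool) : bool :=
  existsb (fun i => andb (i + k <=? length w)%nat (
                    forallb (fun j => negb (nth (i + j) w true)) (seq 0 k)))
          (seq 0 (S (length w))).

(* Probability of the outcome w when the events are independent with
   P(A_i) = u i; the first letter of w corresponds to index i. *)
Fixpoint weight (u : nat -> R) (i : nat) (w : list bool) : R :=
  match w with
  | [] => 1
  | b :: w' => (if b then u i else 1 - u i) * weight u (S i) w'
  end.

Definition prob_no_kgap (k n : nat) (u : nat -> R) : R :=
  fold_right Rplus 0
    (map (fun w => if has_kgapb k w then 0 else weight u 1 w) (bitvecs n)).

Definition prod_1n (n : nat) (g : nat -> R) : R :=
  fold_right Rmult 1 (map g (seq 1 n)).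

(* Main.v *)
Require Import Defs.
From Stdlib Require Import Reals List Arith Lra Lia Bool Permutation ClassicalEpsilon.
Import ListNotations.
Open Scope R_scope.


Definition Gp (k : nat) (L : list bool) : Prop :=
  exists i, (i + k <= length L)%nat /\ forall j, (j < k)%nat -> nth (i+j) L true = false.

Lemma has_kgapb_spec k L : has_kgapb k L = true <-> Gp k L.
Proof.
  unfold has_kgapb, Gp. rewrite existsb_exists. split.
  - intros [i [Hi H]]. apply andb_true_iff in H as [H1 H2].
    apply Nat.leb_le in H1. exists i. split; [exact H1|].
    intros j Hj. rewrite forallb_forall in H2.
    specialize (H2 j). rewrite in_seq in H2.
    assert (H3 := H2 ltac:(lia)). destruct (nth (i+j) L true); simpl in *; congruence.
  - intros [i [Hi H]]. exists i. split.
    + apply in_seq. lia.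
    + apply andb_true_iff. split. apply Nat.leb_le; lia.
      apply forallb_forall. intros j Hj. apply in_seq in Hj.
      rewrite H by lia. reflexivity.
Qed.

Lemma nth_rep c L p d : nth p (repeat false c ++ L) d = if (p <? c)%nat then false else nth (p - c) L d.
Proof.
  destruct (Nat.ltb_spec p c).
  - rewrite app_nth1 by (rewrite repeat_length; lia). apply nth_repeat_lt; lia.
  - rewrite app_nth2 by (rewrite repeat_length; lia). rewrite repeat_length. reflexivity.
Qed.

Lemma gap_true k c w : (1 <= k)%nat -> (Gp k (repeat false c ++ true :: w) <-> ((k <= c)%nat \/ Gp k w)).
Proof.
  intros Hk. unfold Gp. rewrite length_app, repeat_length. simpl. split.
  - intros [i [Hi H]].
    destruct (le_lt_dec (i + k) c) as [H1|H1]. { left; lia. }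
    destruct (le_lt_dec i c) as [H2|H2].
    + specialize (H (c - i)%nat ltac:(lia)). rewrite nth_rep in H.
      replace (i + (c - i))%nat with c in H by lia.
      rewrite Nat.ltb_irrefl, Nat.sub_diag in H. discriminate.
    + right. exists (i - c - 1)%nat. split; [lia|].
      intros j Hj. specialize (H j Hj). rewrite nth_rep in H.
      destruct (Nat.ltb_spec (i+j) c); [lia|].
      replace (i + j - c)%nat with (S (i - c - 1 + j)) in H by lia. exact H.
  - intros [H|[i [Hi H]]].
    + exists 0%nat. split; [lia|]. intros j Hj. rewrite nth_rep.
      destruct (Nat.ltb_spec (0+j) c); [reflexivity|lia].
    + exists (c + S i)%nat. split; [lia|]. intros j Hj. rewrite nth_rep.
      destruct (Nat.ltb_spec (c + S i + j) c); [lia|].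
      replace (c + S i + j - c)%nat with (S (i + j)) by lia. simpl. apply H; lia.
Qed.

Lemma gap_big k c w : (k <= c)%nat -> Gp k (repeat false c ++ w).
Proof.
  intros H. exists 0%nat. rewrite length_app, repeat_length. split; [lia|].
  intros j Hj. rewrite nth_rep. destruct (Nat.ltb_spec (0+j) c); [reflexivity|lia].
Qed.

Lemma gap_nil k c : (c < k)%nat -> ~ Gp k (repeat false c ++ []).
Proof.
  intros H [i [Hi _]]. rewrite length_app, repeat_length in Hi. simpl in Hi. lia.
Qed.

Lemma rep_false c w : repeat false c ++ false :: w = repeat false (S c) ++ w.
Proof. induction c; simpl; [reflexivity| now rewrite IHc]. Qed.

Definition sumR {A} (F : A -> R) (l : list A) := fold_right Rplus 0 (map F l).

Lemma sumR_app {A} (F : A -> R) l1 l2 : sumR F (l1 ++ l2) = sumR F l1 + sumR F l2.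
Proof. unfold sumR. rewrite map_app, fold_right_app. induction l1; simpl. lra. rewrite IHl1. lra. Qed.

Lemma sumR_map {A B} (F : B -> R) (g : A -> B) l : sumR F (map g l) = sumR (fun x => F (g x)) l.
Proof. unfold sumR. now rewrite map_map. Qed.

Lemma sumR_ext {A} (F G : A -> R) l : (forall x, F x = G x) -> sumR F l = sumR G l.
Proof. intros H. unfold sumR. now rewrite (map_ext F G). Qed.

Lemma sumR_scal {A} (F : A -> R) c l : sumR (fun x => c * F x) l = c * sumR F l.
Proof. unfold sumR. induction l; simpl. lra. rewrite IHl. lra. Qed.

Definition Q k u j m n := sumR (fun w => if has_kgapb k (repeat false j ++ w) then 0 else weight u m w) (bitvecs n).

Lemma Q_big k u j m n : (k <= j)%nat -> Q k u j m n = 0.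
Proof.
  intros H. unfold Q, sumR. induction (bitvecs n); simpl. reflexivity.
  assert (has_kgapb k (repeat false j ++ a) = true) as ->. { apply has_kgapb_spec, gap_big; auto. }
  rewrite IHl. lra.
Qed.

Lemma Q_zero k u j m : (j < k)%nat -> Q k u j m 0 = 1.
Proof.
  intros H. unfold Q, sumR. simpl.
  destruct (has_kgapb k (repeat false j ++ [])) eqn:E.
  - apply has_kgapb_spec in E. exfalso. exact (gap_nil k j H E).
  - lra.
Qed.

Lemma Q_step k u j m n : (1 <= k)%nat -> (j < k)%nat ->
  Q k u j m (S n) = u m * Q k u 0 (S m) n + (1 - u m) * Q k u (S j) (S m) n.
Proof.
  intros Hk Hj. unfold Q. simpl bitvecs. rewrite sumR_app, !sumR_map.
  rewrite <- !sumR_scal. f_equal; apply sumR_ext; intros w.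
  - destruct (has_kgapb k (repeat false j ++ true :: w)) eqn:E1;
    destruct (has_kgapb k (repeat false 0 ++ w)) eqn:E2; simpl; try lra.
    + apply has_kgapb_spec in E1. apply (gap_true k j w Hk) in E1.
      destruct E1 as [E1|E1]; [lia|]. apply has_kgapb_spec in E1. simpl in E2. congruence.
    + exfalso. assert (Gp k (repeat false j ++ true :: w)).
      { apply gap_true; auto. right. apply has_kgapb_spec. exact E2. }
      apply has_kgapb_spec in H. congruence.
  - rewrite rep_false. simpl weight. destruct (has_kgapb k (repeat false (S j) ++ w)); lra.
Qed.

Fixpoint Sg (m : nat) (r : R) : R := match m with O => 0 | S m' => 1 + r * Sg m' r end.

Lemma Sg_nonneg m r : 0 <= r -> 0 <= Sg m r.
Proof. intros H; induction m; simpl; nra. Qed.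

Lemma Sg_ge1 m r : 0 <= r -> (1 <= m)%nat -> 1 <= Sg m r.
Proof. intros H Hm. destruct m; [lia|]. simpl. pose proof (Sg_nonneg m r H). nra. Qed.

Lemma Sg_split m p r : Sg (m + p) r = Sg m r + r ^ m * Sg p r.
Proof. induction m; simpl. lra. rewrite IHm. ring. Qed.

Lemma Sg_mono m a b : 0 <= a <= b -> Sg m a <= Sg m b.
Proof.
  intros H; induction m; simpl. lra.
  pose proof (Sg_nonneg m a ltac:(lra)). nra.
Qed.

Lemma Sg_cross m a b : 0 <= a <= b -> Sg m b * a ^ m <= Sg m a * b ^ m.
Proof.
  intros H; induction m; simpl. lra.
  pose proof (Sg_nonneg m a ltac:(lra)). pose proof (Sg_nonneg m b ltac:(lra)).
  assert (a ^ m <= b ^ m) by (apply pow_incr; lra).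
  assert (0 <= a ^ m) by (apply pow_le; lra).
  assert (a * a ^ m <= b * b ^ m) by nra.
  assert (a * b * (Sg m b * a ^ m) <= a * b * (Sg m a * b ^ m)) by (apply Rmult_le_compat_l; nra).
  nra.
Qed.

Definition psi k j r := Sg (k - j) r / Sg k r.

Lemma psi_nonneg k j r : 0 <= r -> (1 <= k)%nat -> 0 <= psi k j r.
Proof.
  intros. unfold psi. pose proof (Sg_ge1 k r H H0). pose proof (Sg_nonneg (k-j) r H).
  unfold Rdiv; apply Rmult_le_pos; [lra| left; apply Rinv_0_lt_compat; lra].
Qed.

Lemma psi_le1 k j r : 0 <= r -> (1 <= k)%nat -> psi k j r <= 1.
Proof.
  intros. unfold psi. pose proof (Sg_ge1 k r H H0).
  assert (Sg (k - j) r <= Sg k r).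
  { replace k with ((k - j) + (k - (k - j)))%nat at 2 by lia. rewrite Sg_split.
    pose proof (Sg_nonneg (k - (k-j)) r H). assert (0 <= r ^ (k-j)) by (apply pow_le; lra). nra. }
  unfold Rdiv. apply Rle_trans with (Sg k r * / Sg k r).
  apply Rmult_le_compat_r; [left; apply Rinv_0_lt_compat; lra| lra].
  rewrite Rinv_r by lra. lra.
Qed.

Lemma psi_0 k r : 0 <= r -> (1 <= k)%nat -> psi k 0 r = 1.
Proof. intros. unfold psi. rewrite Nat.sub_0_r. pose proof (Sg_ge1 k r H H0). field. lra. Qed.

Lemma psi_big k j r : (k <= j)%nat -> psi k j r = 0.
Proof. intros. unfold psi. replace (k - j)%nat with 0%nat by lia. simpl. lra. Qed.

Lemma psi_anti k j a b : 0 <= a <= b -> (1 <= k)%nat -> psi k j b <= psi k j a.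
Proof.
  intros H Hk. destruct (le_lt_dec k j). { rewrite !psi_big by lia. lra. }
  unfold psi. set (m := (k - j)%nat). set (p := (k - m)%nat).
  assert (Hk2 : k = (m + p)%nat) by lia.
  pose proof (Sg_ge1 k a ltac:(lra) Hk). pose proof (Sg_ge1 k b ltac:(lra) Hk).
  apply Rmult_le_reg_r with (Sg k a * Sg k b). nra.
  replace (Sg m b / Sg k b * (Sg k a * Sg k b)) with (Sg m b * Sg k a) by (field; lra).
  replace (Sg m a / Sg k a * (Sg k a * Sg k b)) with (Sg m a * Sg k b) by (field; lra).
  rewrite Hk2, !Sg_split.
  pose proof (Sg_cross m a b H). pose proof (Sg_mono p a b H).
  pose proof (Sg_nonneg p a ltac:(lra)). pose proof (Sg_nonneg m b ltac:(lra)).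
  assert (0 <= a ^ m) by (apply pow_le; lra).
  assert (Sg m b * a ^ m * Sg p a <= Sg m a * b ^ m * Sg p b).
  { apply Rle_trans with (Sg m a * b ^ m * Sg p a). apply Rmult_le_compat_r; lra.
    apply Rmult_le_compat_l; [|lra]. pose proof (Sg_nonneg m a ltac:(lra)).
    assert (0 <= b ^ m) by (apply pow_le; lra). nra. }
  nra.
Qed.

Lemma psi_eigen k j r : 0 <= r -> (j < k)%nat ->
  (Sg k r / Sg (S k) r) * psi k j r = 1 / Sg (S k) r + (1 - 1 / Sg (S k) r) * psi k (S j) r.
Proof.
  intros Hr Hj. unfold psi. pose proof (Sg_ge1 k r Hr ltac:(lia)).
  replace (k - j)%nat with (S (k - S j)) by lia. simpl Sg.
  pose proof (Sg_nonneg k r Hr). field. nra.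
Qed.

Definition Lam (F : nat -> R) m r := fold_right Rmult 1 (map F (seq m r)).

Lemma core k n u F rho : (1 <= k)%nat ->
  (forall m, (1 <= m <= n)%nat -> 0 <= u m <= 1) ->
  (forall m, (1 <= m <= n)%nat -> 0 <= F m) ->
  (forall m, 0 <= rho m) ->
  (forall m j, (1 <= m <= n)%nat -> F m * psi k j (rho m) <= u m + (1 - u m) * psi k (S j) (rho (S m))) ->
  Q k u 0 1 n >= Lam F 1 n.
Proof.
  intros Hk Hu HF Hr Hstep.
  assert (Main : forall r m, (1 <= m)%nat -> (m + r = S n)%nat -> forall j,
            Q k u j m r >= Lam F m r * psi k j (rho m) /\ 0 <= Lam F m r).
  { induction r; intros m Hm Hmr j.
    - unfold Lam. simpl. split; [|lra]. destruct (le_lt_dec k j).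
      + rewrite Q_big, psi_big by lia. lra.
      + rewrite Q_zero by lia. pose proof (psi_le1 k j (rho m) (Hr m) Hk). lra.
    - destruct (IHr (S m) ltac:(lia) ltac:(lia) 0%nat) as [I0 L0].
      destruct (IHr (S m) ltac:(lia) ltac:(lia) (S j)) as [I1 _].
      assert (HL : Lam F m (S r) = F m * Lam F (S m) r) by reflexivity.
      pose proof (HF m ltac:(lia)). pose proof (Hu m ltac:(lia)).
      split; [| rewrite HL; nra].
      destruct (le_lt_dec k j).
      + rewrite Q_big, psi_big by lia. lra.
      + rewrite Q_step by lia. rewrite psi_0 in I0 by auto.
        specialize (Hstep m j ltac:(lia)).
        rewrite HL.
        assert (u m * Q k u 0 (S m) r >= u m * Lam F (S m) r) by nra.
        assert ((1 - u m) * Q k u (S j) (S m) r >= (1 - u m) * (Lam F (S m) r * psi k (S j) (rho (S m)))) by nra.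
        assert (Lam F (S m) r * (F m * psi k j (rho m)) <= Lam F (S m) r * (u m + (1 - u m) * psi k (S j) (rho (S m)))) by (apply Rmult_le_compat_l; lra).
        nra. }
  destruct (Main n 1%nat ltac:(lia) ltac:(lia) 0%nat) as [H _].
  rewrite psi_0 in H by auto. lra.
Qed.

Definition hh k (t : R) := t ^ k - t ^ (k + 1).

Lemma hh_deriv k t : derivable_pt_lim (hh k) t (INR k * t ^ pred k - INR (k+1) * t ^ pred (k+1)).
Proof.
  unfold hh. apply (derivable_pt_lim_minus (fun y => y ^ k) (fun y => y ^ (k+1))); apply derivable_pt_lim_pow.
Qed.

Lemma deriv_form k t : (1 <= k)%nat ->
  INR k * t ^ pred k - INR (k+1) * t ^ pred (k+1) = t ^ pred k * (INR k - INR (k+1) * t).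
Proof.
  intros Hk. destruct k; [lia|]. replace (S k + 1)%nat with (S (S k)) by lia.
  change (pred (S k)) with k. change (pred (S (S k))) with (S k). rewrite <- tech_pow_Rmult. ring.
Qed.

Definition cc k := 1 - / INR (S k).

Lemma cc_facts k : (1 <= k)%nat -> 0 < cc k < 1 /\ INR k - INR (k+1) * cc k = 0.
Proof.
  intros Hk. unfold cc. assert (1 <= INR k) by (apply (le_INR 1); lia).
  rewrite plus_INR, S_INR. simpl INR. split; [split|].
  - assert (/ (INR k + 1) < 1). { rewrite <- Rinv_1. apply Rinv_lt_contravar; lra. } lra.
  - assert (0 < / (INR k + 1)) by (apply Rinv_0_lt_compat; lra). lra.
  - field. lra.
Qed.

Lemma H_inc k a b : (1 <= k)%nat -> 0 <= a -> a < b -> b <= cc k -> hh k a < hh k b.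
Proof.
  intros Hk Ha Hab Hb. destruct (cc_facts k Hk) as [[c0 c1] ce].
  destruct (MVT_cor2 (hh k) _ a b Hab (fun c _ => hh_deriv k c)) as [c [E Hc]].
  rewrite deriv_form in E by auto.
  assert (0 < c ^ pred k) by (apply pow_lt; lra).
  assert (0 < INR k - INR (k+1) * c).
  { assert (0 < INR (k+1)) by (apply lt_0_INR; lia).
    assert (0 < INR (k+1) * (cc k - c)) by (apply Rmult_lt_0_compat; lra). nra. }
  assert (0 < c ^ pred k * (INR k - INR (k + 1) * c) * (b - a)) by (apply Rmult_lt_0_compat; [apply Rmult_lt_0_compat|]; lra).
  lra.
Qed.

Lemma H_dec k a b : (1 <= k)%nat -> cc k <= a -> a < b -> b <= 1 -> hh k b < hh k a.
Proof.
  intros Hk Ha Hab Hb. destruct (cc_facts k Hk) as [[c0 c1] ce].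
  destruct (MVT_cor2 (hh k) _ a b Hab (fun c _ => hh_deriv k c)) as [c [E Hc]].
  rewrite deriv_form in E by auto.
  assert (0 < c ^ pred k) by (apply pow_lt; lra).
  assert (INR k - INR (k+1) * c < 0).
  { assert (0 < INR (k+1)) by (apply lt_0_INR; lia).
    assert (0 < INR (k+1) * (c - cc k)) by (apply Rmult_lt_0_compat; lra). nra. }
  assert (c ^ pred k * (INR k - INR (k + 1) * c) * (b - a) < 0).
  { assert (c ^ pred k * (INR k - INR (k + 1) * c) < 0) by nra. nra. }
  lra.
Qed.

Lemma f_cc k f : (1 <= k)%nat -> is_fk k f -> f (cc k) = cc k.
Proof.
  intros Hk [Hr [He Hd]]. destruct (cc_facts k Hk) as [[c0 c1] _].
  specialize (Hr (cc k) ltac:(lra)). specialize (He (cc k) ltac:(lra)).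
  assert (HH : hh k (f (cc k)) = hh k (cc k)) by (unfold hh; exact He).
  destruct (Rtotal_order (f (cc k)) (cc k)) as [H|[H|H]]; auto.
  - pose proof (H_inc k (f (cc k)) (cc k) Hk ltac:(lra) H ltac:(lra)). lra.
  - pose proof (H_dec k (cc k) (f (cc k)) Hk ltac:(lra) H ltac:(lra)). lra.
Qed.

Lemma f_one k f : (1 <= k)%nat -> is_fk k f -> f 1 = 0.
Proof.
  intros Hk Hf. pose proof (f_cc k f Hk Hf) as Hc. destruct Hf as [Hr [He Hd]].
  destruct (cc_facts k Hk) as [[c0 c1] _].
  pose proof (Hr 1 ltac:(lra)). specialize (He 1 ltac:(lra)).
  specialize (Hd (cc k) 1 ltac:(lra) ltac:(lra) ltac:(lra)).
  assert (HH : hh k (f 1) = hh k 1) by (unfold hh; exact He).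
  assert (hh k 1 = 0) by (unfold hh; rewrite !pow1; ring).
  destruct (Rtotal_order (f 1) 0) as [H1|[H1|H1]]; [lra|auto|].
  pose proof (H_inc k 0 (f 1) Hk ltac:(lra) H1 ltac:(lra)).
  assert (hh k 0 = 0) by (unfold hh; destruct k; [lia|]; simpl; ring). lra.
Qed.

Lemma Sg_lo m r : 0 <= r <= 1 -> INR (S m) * r ^ m <= Sg (S m) r.
Proof.
  intros H. induction m. simpl. lra.
  change (Sg (S (S m)) r) with (1 + r * Sg (S m) r).
  rewrite S_INR. simpl pow. assert (r ^ S m <= 1) by (rewrite <- (pow1 (S m)); apply pow_incr; lra).
  assert (0 <= r ^ m) by (apply pow_le; lra). simpl in H0.
  assert (r * (INR (S m) * r ^ m) <= r * Sg (S m) r) by (apply Rmult_le_compat_l; lra). nra.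
Qed.

Lemma Sg_up m r : 0 <= r <= 1 -> Sg m r <= INR m.
Proof.
  intros H. induction m. simpl. lra. simpl Sg. rewrite S_INR.
  pose proof (Sg_nonneg m r ltac:(lra)). nra.
Qed.

Lemma Sg_hi m r : 1 <= r -> Sg (S m) r <= INR (S m) * r ^ m.
Proof.
  intros H. induction m. simpl. lra.
  change (Sg (S (S m)) r) with (1 + r * Sg (S m) r).
  rewrite S_INR. simpl pow. assert (1 <= r ^ S m) by (apply pow_R1_Rle; lra).
  simpl in H0.
  assert (r * Sg (S m) r <= r * (INR (S m) * r ^ m)) by (apply Rmult_le_compat_l; lra). nra.
Qed.

Lemma Sg_ge m r : 1 <= r -> INR m <= Sg m r.
Proof.
  intros H. induction m. simpl. lra. simpl Sg. rewrite S_INR. pose proof (pos_INR m). nra.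
Qed.

Lemma f_param k f r : (1 <= k)%nat -> is_fk k f -> 0 <= r ->
  f (1 - 1 / Sg (S k) r) <= Sg k r / Sg (S k) r.
Proof.
  intros Hk Hf Hr. pose proof (f_cc k f Hk Hf) as Hc. destruct Hf as [Hrg [He Hd]].
  destruct (cc_facts k Hk) as [[c0 c1] _].
  set (S1 := Sg (S k) r). set (Sk := Sg k r).
  assert (ES : S1 = 1 + r * Sk) by reflexivity.
  assert (ES2 : S1 = Sk + r ^ k).
  { unfold S1, Sk. replace (S k) with (k + 1)%nat by lia. rewrite Sg_split. simpl. ring. }
  pose proof (Sg_ge1 k r Hr Hk) as Sk1. fold Sk in Sk1.
  assert (0 <= r ^ k) by (apply pow_le; lra).
  set (q := 1 - 1 / S1). set (l := Sk / S1).
  assert (Eq : q = r * l) by (unfold q, l; rewrite ES; field; lra).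
  assert (El : l = 1 - r ^ k / S1) by (unfold l; rewrite ES2; field; lra).
  assert (q0 : 0 <= q <= 1).
  { unfold q. split. apply Rmult_le_reg_r with S1; [lra|]. field_simplify; lra.
    assert (0 < 1 / S1) by (apply Rdiv_lt_0_compat; lra). lra. }
  assert (l0 : 0 <= l <= 1).
  { rewrite El. split. apply Rmult_le_reg_r with S1; [lra|]. field_simplify; lra.
    assert (0 <= r ^ k / S1) by (apply Rmult_le_pos; [lra| left; apply Rinv_0_lt_compat; lra]). lra. }
  assert (Hh : hh k q = hh k l).
  { unfold hh. replace (q ^ (k+1)) with (q ^ k * q) by (rewrite pow_add; ring).
    replace (l ^ (k+1)) with (l ^ k * l) by (rewrite pow_add; ring).
    rewrite Eq, Rpow_mult_distr.
    replace (r ^ k * l ^ k - r ^ k * l ^ k * (r * l)) with (r ^ k * l ^ k * (1 - r * l)) by ring.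
    replace (l ^ k - l ^ k * l) with (l ^ k * (1 - l)) by ring.
    rewrite <- Eq. unfold q. rewrite El. field. lra. }
  pose proof (Hrg q q0) as fq. specialize (He q q0). assert (Hfq : hh k (f q) = hh k q) by (unfold hh; exact He).
  assert (INR (S k) = INR k + 1) by (rewrite S_INR; lra).
  assert (0 < INR (S k)) by (apply lt_0_INR; lia).
  assert (ck : cc k = 1 - 1 / INR (S k)) by (unfold cc; field; lra).
  destruct (Rle_dec r 1) as [Hr1|Hr1].
  -
    pose proof (Sg_up (S k) r ltac:(lra)). pose proof (Sg_lo k r ltac:(lra)). fold S1 in H2, H3.
    assert (qc : q <= cc k).
    { unfold q. rewrite ck. assert (1 / INR (S k) <= 1 / S1). { apply Rmult_le_compat_l; [lra|]. apply Rinv_le_contravar; lra. } lra. }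
    assert (lc : cc k <= l).
    { rewrite El, ck. assert (r ^ k / S1 <= 1 / INR (S k)).
      { apply Rmult_le_reg_r with S1; [lra|]. apply Rmult_le_reg_r with (INR (S k)); [lra|].
        field_simplify; lra. } lra. }
    pose proof (Hd q (cc k) q0 ltac:(lra) qc). rewrite Hc in H4.
    destruct (Rle_dec (f q) l) as [|Hn]; [auto|]. exfalso.
    pose proof (H_dec k l (f q) Hk lc ltac:(lra) ltac:(lra)). lra.
  - pose proof (Sg_ge (S k) r ltac:(lra)). pose proof (Sg_hi k r ltac:(lra)). fold S1 in H2, H3.
    assert (qc : cc k <= q).
    { unfold q. rewrite ck. assert (1 / S1 <= 1 / INR (S k)). { apply Rmult_le_compat_l; [lra|]. apply Rinv_le_contravar; lra. } lra. }
    assert (lc : l <= cc k).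
    { rewrite El, ck. assert (1 / INR (S k) <= r ^ k / S1).
      { apply Rmult_le_reg_r with S1; [lra|]. apply Rmult_le_reg_r with (INR (S k)); [lra|].
        field_simplify; lra. } lra. }
    pose proof (Hd (cc k) q ltac:(lra) q0 qc). rewrite Hc in H4.
    destruct (Rle_dec (f q) l) as [|Hn]; [auto|]. exfalso.
    pose proof (H_inc k l (f q) Hk ltac:(lra) ltac:(lra) ltac:(lra)). lra.
Qed.

Lemma Sg_cont m : continuity (Sg m).
Proof.
  induction m.
  - change (Sg 0) with (fct_cte 0). apply continuity_const. intros a b; reflexivity.
  - change (Sg (S m)) with (plus_fct (fct_cte 1) (mult_fct id (Sg m))).
    apply continuity_plus. apply continuity_const. intros a b; reflexivity.
    apply continuity_mult. apply derivable_continuous, derivable_id. exact IHm.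
Qed.

Lemma rho_exists k x : (1 <= k)%nat -> 0 < x <= 1 -> exists r, 0 <= r /\ x * Sg (S k) r = 1.
Proof.
  intros Hk Hx.
  assert (Hc : continuity (fun r => x * Sg (S k) r - 1)).
  { apply continuity_minus. apply continuity_scal. apply Sg_cont.
    apply continuity_const. intros a b; reflexivity. }
  assert (0 <= / x) by (left; apply Rinv_0_lt_compat; lra).
  destruct (IVT_cor _ 0 (/ x) Hc H) as [z [Hz E]].
  - simpl Sg. pose proof (Sg_ge1 k (/x) H Hk).
    assert (x * (1 + / x * Sg k (/ x)) - 1 = x * Sg k (/x) * / x + x - 1) by ring.
    rewrite H1. replace (x * Sg k (/ x) * / x) with (Sg k (/x)) by (field; lra).
    assert (x * (1 + 0 * 0) - 1 <= 0) by lra. nra.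
  - exists z. split; lra.
Qed.

Lemma Sg_strict k a b : (1 <= k)%nat -> 0 <= a -> a < b -> Sg (S k) a < Sg (S k) b.
Proof.
  intros Hk Ha Hab. simpl. pose proof (Sg_mono k a b ltac:(lra)).
  pose proof (Sg_ge1 k b ltac:(lra) Hk). pose proof (Sg_nonneg k a Ha). nra.
Qed.

Theorem inc_case (k n : nat) (f : R -> R) (u : nat -> R) :
  (1 <= k)%nat -> is_fk k f ->
  (forall i, (1 <= i <= n)%nat -> 0 <= u i <= 1) ->
  (forall i j, (1 <= i)%nat -> (i <= j)%nat -> (j <= n)%nat -> u i <= u j) ->
  prob_no_kgap k n u >= prod_1n n (fun i => f (1 - u i)).
Proof.
  intros Hk Hf Hu Hmono.
  assert (Hex : forall m, exists r, 0 <= r /\ (((1 <= m <= n)%nat /\ 0 < u m) -> u m * Sg (S k) r = 1)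
     /\ (~ ((1 <= m <= n)%nat /\ 0 < u m) -> r = 0)).
  { intros m. destruct (classic ((1 <= m <= n)%nat /\ 0 < u m)) as [Hc|Hc].
    - destruct (rho_exists k (u m) Hk ltac:(pose proof (Hu m (proj1 Hc)); lra)) as [r Hr].
      exists r. tauto.
    - exists 0. split; [lra| tauto]. }
  set (rho := fun m => proj1_sig (constructive_indefinite_description _ (Hex m))).
  assert (Hrho : forall m, 0 <= rho m /\ (((1 <= m <= n)%nat /\ 0 < u m) -> u m * Sg (S k) (rho m) = 1)
     /\ (~ ((1 <= m <= n)%nat /\ 0 < u m) -> rho m = 0)).
  { intros m. unfold rho. destruct (constructive_indefinite_description _ (Hex m)). exact a. }
  change (prob_no_kgap k n u) with (Q k u 0 1 n).
  change (prod_1n n (fun i => f (1 - u i))) with (Lam (fun i => f (1 - u i)) 1 n).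
  apply core with (rho := rho).
  - exact Hk.
  - exact Hu.
  - intros m Hm. destruct Hf as [Hr _]. apply Hr. pose proof (Hu m Hm). lra.
  - intros m. apply Hrho.
  - intros m j Hm. pose proof (Hu m Hm) as Hum.
    destruct (Rle_lt_dec (u m) 0) as [H0|H0].
    + replace (u m) with 0 by lra. replace (1 - 0) with 1 by ring.
      rewrite (f_one k f Hk Hf). pose proof (psi_nonneg k (S j) (rho (S m)) (proj1 (Hrho (S m))) Hk). lra.
    + destruct (Hrho m) as [r0 [E _]]. specialize (E (conj Hm H0)).
      set (r := rho m) in *.
      pose proof (Sg_ge1 (S k) r r0 ltac:(lia)) as S1.
      assert (Eu : u m = 1 / Sg (S k) r) by (rewrite <- E; field; lra).
      assert (Hmr : rho (S m) <= r).
      { destruct (Nat.eq_dec m n) as [->|Hne].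
        - destruct (Hrho (S n)) as [_ [_ E2]]. rewrite E2 by lia. exact r0.
        - destruct (Hrho (S m)) as [r1 [E1 _]].
          assert (Hup : u m <= u (S m)) by (apply Hmono; lia).
          assert (Hc1 : (1 <= S m <= n)%nat /\ 0 < u (S m)) by (split; [lia|lra]). specialize (E1 Hc1).
          destruct (Rle_lt_dec (rho (S m)) r) as [|Hlt]; [assumption|].
          pose proof (Sg_strict k r (rho (S m)) Hk r0 Hlt).
          pose proof (Sg_ge1 (S k) (rho (S m)) r1 ltac:(lia)).
          assert (u m * Sg (S k) r < u m * Sg (S k) (rho (S m))) by (apply Rmult_lt_compat_l; lra).
          assert (u m * Sg (S k) (rho (S m)) <= u (S m) * Sg (S k) (rho (S m))) by (apply Rmult_le_compat_r; lra).
          lra. }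
      pose proof (f_param k f r Hk Hf r0) as Hfp. rewrite <- Eu in Hfp.
      pose proof (psi_nonneg k j r r0 Hk).
      assert (f (1 - u m) * psi k j r <= Sg k r / Sg (S k) r * psi k j r) by (apply Rmult_le_compat_r; lra).
      destruct (le_lt_dec k j).
      * rewrite psi_big in * by lia. pose proof (psi_nonneg k (S j) (rho (S m)) (proj1 (Hrho (S m))) Hk). nra.
      * rewrite psi_eigen in H1 by auto. rewrite <- Eu in H1.
        pose proof (psi_anti k (S j) (rho (S m)) r ltac:(split; [apply Hrho|lra]) Hk). nra.
Qed.

Lemma bitvecs_len n w : In w (bitvecs n) -> length w = n.
Proof.
  revert w; induction n; simpl; intros w H.
  - destruct H as [<-|[]]; reflexivity.
  - apply in_app_or in H. destruct H as [H|H]; apply in_map_iff in H as [w' [<- H]]; simpl; f_equal; auto.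
Qed.

Lemma bitvecs_complete n w : length w = n -> In w (bitvecs n).
Proof.
  revert w; induction n; simpl; intros w H.
  - destruct w; [left; reflexivity| simpl in H; lia].
  - destruct w as [|b w]; simpl in H; [lia|]. apply in_or_app.
    destruct b; [left|right]; apply in_map; apply IHn; lia.
Qed.

Lemma bitvecs_nodup n : NoDup (bitvecs n).
Proof.
  induction n; simpl.
  - constructor. intros []. constructor.
  - apply NoDup_app.
    + apply FinFun.Injective_map_NoDup; [intros x y H; injection H; auto| auto].
    + apply FinFun.Injective_map_NoDup; [intros x y H; injection H; auto| auto].
    + intros a H1 H2. apply in_map_iff in H1 as [x [<- _]]. apply in_map_iff in H2 as [y [E _]]. discriminate.
Qed.

Lemma perm_rev_bitvecs n : Permutation (bitvecs n) (map (@rev bool) (bitvecs n)).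
Proof.
  apply NoDup_Permutation.
  - apply bitvecs_nodup.
  - apply FinFun.Injective_map_NoDup; [|apply bitvecs_nodup].
    intros x y H. rewrite <- (rev_involutive x), <- (rev_involutive y), H. reflexivity.
  - intros x. split; intros H.
    + apply in_map_iff. exists (rev x). rewrite rev_involutive. split; [reflexivity|].
      apply bitvecs_complete. rewrite length_rev. apply bitvecs_len; auto.
    + apply in_map_iff in H as [y [<- Hy]]. apply bitvecs_complete. rewrite length_rev. apply bitvecs_len; auto.
Qed.

Lemma sumR_perm {T} (F : T -> R) l l' : Permutation l l' -> sumR F l = sumR F l'.
Proof.
  intros P. induction P; unfold sumR in *; simpl; try lra.
Qed.

Lemma prod_perm l l' : Permutation l l' -> fold_right Rmult 1 l = fold_right Rmult 1 l'.
Proof.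
  intros P. induction P; simpl; try lra; try congruence.
Qed.

Lemma Gp_rev_1 k w : Gp k w -> Gp k (rev w).
Proof.
  intros [i [Hi H]]. exists (length w - k - i)%nat. rewrite length_rev. split; [lia|].
  intros j Hj. rewrite rev_nth by lia.
  replace (length w - S (length w - k - i + j))%nat with (i + (k - 1 - j))%nat by lia.
  apply H. lia.
Qed.

Lemma has_kgapb_rev k w : has_kgapb k (rev w) = has_kgapb k w.
Proof.
  destruct (has_kgapb k w) eqn:E.
  - apply has_kgapb_spec. apply Gp_rev_1. apply has_kgapb_spec. auto.
  - destruct (has_kgapb k (rev w)) eqn:E2; [|reflexivity].
    apply has_kgapb_spec in E2. apply Gp_rev_1 in E2. rewrite rev_involutive in E2.
    apply has_kgapb_spec in E2. congruence.
Qed.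

Lemma weight_app u m l1 l2 : weight u m (l1 ++ l2) = weight u m l1 * weight u (m + length l1) l2.
Proof.
  revert m; induction l1; intros m; simpl. rewrite Nat.add_0_r. ring.
  rewrite IHl1. replace (S m + length l1)%nat with (m + S (length l1))%nat by lia. ring.
Qed.

Lemma weight_rev u n w a : (1 <= a)%nat -> (a + length w <= S n)%nat ->
  weight (fun i => u (S n - i)%nat) a w = weight u (S (S n) - a - length w) (rev w).
Proof.
  revert a; induction w as [|b w IH]; intros a Ha Hl.
  - reflexivity.
  - cbn [weight rev length] in *.
    rewrite weight_app, (IH (S a)) by lia. rewrite length_rev. cbn [weight].
    replace (S (S n) - a - S (length w) + length w)%nat with (S n - a)%nat by lia.
    replace (S (S n) - S a - length w)%nat with (S (S n) - a - S (length w))%nat by lia.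
    ring.
Qed.

Lemma prob_rev k n u : prob_no_kgap k n (fun i => u (S n - i)%nat) = prob_no_kgap k n u.
Proof.
  unfold prob_no_kgap. fold (sumR (fun w => if has_kgapb k w then 0 else weight u 1 w) (bitvecs n)).
  fold (sumR (fun w => if has_kgapb k w then 0 else weight (fun i => u (S n - i)%nat) 1 w) (bitvecs n)).
  rewrite (sumR_perm _ _ _ (perm_rev_bitvecs n)). rewrite sumR_map.
  unfold sumR. f_equal. apply map_ext_in. intros w Hw.
  pose proof (bitvecs_len n w) as Hl. rewrite has_kgapb_rev.
  destruct (has_kgapb k w); [reflexivity|].
  specialize (Hl Hw). rewrite (weight_rev u n (rev w) 1) by (rewrite ?length_rev; lia).
  rewrite rev_involutive, length_rev, Hl. f_equal. lia.
Qed.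

Lemma rev_seq1 n : rev (seq 1 n) = map (fun i => S n - i)%nat (seq 1 n).
Proof.
  induction n. reflexivity.
  change (map (fun i => S (S n) - i)%nat (seq 1 (S n))) with (S n :: map (fun i => S (S n) - i)%nat (seq 2 n)).
  rewrite seq_S, rev_app_distr, IHn.
  cbn [rev app map]. f_equal.
  rewrite <- (seq_shift n 1), map_map. apply map_ext. intros a. lia.
Qed.

Lemma prod_rev n g : prod_1n n (fun i => g (S n - i)%nat) = prod_1n n g.
Proof.
  unfold prod_1n. rewrite <- (map_map (fun i => S n - i)%nat g), <- rev_seq1, map_rev.
  symmetry. apply prod_perm. apply Permutation_rev.
Qed.

Theorem mainTheorem3 (k n : nat) (f : R -> R) (u : nat -> R) :
  (1 <= k)%nat ->
  is_fk k f ->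
  (forall i, (1 <= i <= n)%nat -> 0 <= u i <= 1) ->
  ((forall i j, (1 <= i)%nat -> (i <= j)%nat -> (j <= n)%nat -> u i <= u j) \/
   (forall i j, (1 <= i)%nat -> (i <= j)%nat -> (j <= n)%nat -> u j <= u i)) ->
  prob_no_kgap k n u >= prod_1n n (fun i => f (1 - u i)).
Proof.
  intros Hk Hf Hu [Hi|Hd].
  - apply inc_case; auto.
  - rewrite <- prob_rev, <- (prod_rev n (fun i => f (1 - u i))).
    apply (inc_case k n f (fun i => u (S n - i)%nat) Hk Hf).
    + intros i Hi. apply Hu. lia.
    + intros i j H1 H2 H3. apply Hd; lia.
Qed.
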